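(* Consider three CDNs, $CDN_1,CDN_2,CDN_3$, with performance parameters $0\le\beta_1<\beta_2<\beta_3<1$, competing by prices in the model described in the context. Let $(w_1^*,w_2^*,w_3^* )$ be a Nash equilibrium in prices at which each of the three CDNs attracts a set of content providers of positive measure, and let $\Lambda_k^*$ and $J_k^*$ denote the equilibrium number of content providers and revenue of $CDN_k$. Then $$\Lambda_1^*>\Lambda_2^*>2\Lambda_3^*,\qquad w_1^*>1.5\,w_2^*>3\,w_3^*,$$ and consequently the revenue of $CDN_2$ is at least four times that of $CDN_3$, the revenue of $CDN_1$ is at least six times that of $CDN_3$, and $J_1^*>1.5\,J_2^*>6\,J_3^*$.
   Context: Each $CDN_k$ ($k=1,2,3$) has a fixed performance parameter $\beta_k\in[0,1)$ and announces a price $w_k\ge0$. There is a continuum of content providers of total mass $\Lambda>0$ whose sensitivity parameters $\theta$ are uniformly distributed on $[0,1]$. A content provider with sensitivity $\theta$ that hires $CDN_k$ obtains payoff $U(\theta,k)=\theta(1-\beta_k)-w_k$; hiring no CDN gives payoff $0$. Each content provider hires at most one CDN and chooses an option of maximum payoff (indifferent providers form a set of measure zero). $\Lambda_k(w_1,w_2,w_3)$ is $\Lambda$ times the measure of the set of $\theta\in[0,1]$ choosing $CDN_k$, and the revenue of $CDN_k$ is $J_k=\Lambda_k w_k$. A Nash equilibrium is a price vector $(w_1^*,w_2^*,w_3^* )$ such that no $CDN_k$ can increase $J_k$ by changing only its own price $w_k\ge0$. *)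

(* Defs.v *)
From HB Require Import structures.
From mathcomp Require Import all_boot all_order all_algebra.
From mathcomp Require Import all_classical all_reals all_analysis.
Set Implicit Arguments. Unset Strict Implicit. Unset Printing Implicit Defensive.
Import Order.TTheory GRing.Theory Num.Theory.
Local Open Scope classical_set_scope.
Local Open Scope ring_scope.

Definition cdn1 : 'I_3 := @Ordinal 3 0 isT.
Definition cdn2 : 'I_3 := @Ordinal 3 1 isT.
Definition cdn3 : 'I_3 := @Ordinal 3 2 isT.

Section Model.
Variable R : realType.

Definition payoff (beta w : 'I_3 -> R) (theta : R) (k : 'I_3) : R :=
  theta * (1 - beta k) - w k.

(* content providers theta in [0,1] choosing CDN_k: k gives a strictly larger
   payoff than every other CDN and than hiring none (ties form a null set). *)
Definition choosers (beta w : 'I_3 -> R) (k : 'I_3) : set R :=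
  [set theta | 0 <= theta <= 1 /\ 0 < payoff beta w theta k /\
     forall j : 'I_3, j != k -> payoff beta w theta j < payoff beta w theta k].

Definition demand (Lam : R) (beta w : 'I_3 -> R) (k : 'I_3) : R :=
  Lam * fine (lebesgue_measure (choosers beta w k)).

Definition revenue (Lam : R) (beta w : 'I_3 -> R) (k : 'I_3) : R :=
  demand Lam beta w k * w k.

Definition set_price (w : 'I_3 -> R) (k : 'I_3) (p : R) : 'I_3 -> R :=
  fun j => if j == k then p else w j.

Definition nash_eq (Lam : R) (beta w : 'I_3 -> R) : Prop :=
  (forall k, 0 <= w k) /\
  forall (k : 'I_3) (p : R), 0 <= p ->
    revenue Lam beta (set_price w k p) k <= revenue Lam beta w k.

End Model.

(* Main.v *)
Require Import Defs.
From HB Require Import structures.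
From mathcomp Require Import all_boot all_order all_algebra.
From mathcomp Require Import all_classical all_reals all_analysis.
From mathcomp Require Import ring lra.
Import Order.TTheory GRing.Theory Num.Theory.
Local Open Scope ring_scope.

Section Helpers.
Variable R : realType.
Local Open Scope classical_set_scope.
Local Open Scope ring_scope.


Lemma foc (A B w d : R) : 0 < B -> 0 < d -> 0 <= w -> 0 < A - B*w ->
 (forall p, 0 <= p -> `|p - w| < d -> p*(A - B * p) <= w*(A - B*w)) -> A = 2*B*w.
Proof.
move=> B0 d0 w0 Aw H.
have key : forall h, (w+h)*(A - B*(w+h)) - w*(A - B*w) = h*(A - 2*B*w) - B*h^+2.
  by move=> h; ring.
set c := A - 2*B*w in key.
set e := c / (2*B).
have he : 2 * B * e = c by rewrite /e; field; rewrite gt_eqF.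
case: (ltgtP c 0) => hc; last by rewrite /c in hc; lra.
all: have hc2 := hc; rewrite /c in hc2.
-
  have wpos : 0 < w by nra.
  have eneg : e < 0 by nra.
  pose h := Num.min (Num.min (d/2) w) (- e).
  have hpos : 0 < h by rewrite /h !lt_min; apply/andP; split; [apply/andP; split|]; lra.
  have h1 : h <= d/2 by rewrite /h !ge_min lexx.
  have h2 : h <= w by rewrite /h !ge_min lexx orbT.
  have h3 : h <= - e by rewrite /h ge_min lexx orbT.
  have := H (w - h).
  have -> : w - h - w = - h by ring.
  rewrite normrN gtr0_norm //.
  move=> /(_ ltac:(lra) ltac:(lra)).
  have hb : B * h <= - c / 2 by nra.
  have := key (- h). nra.
-
  have epos : 0 < e by nra.
  pose h := Num.min (d/2) e.
  have hpos : 0 < h by rewrite /h !lt_min; apply/andP; split; nra.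
  have h1 : h <= d/2 by rewrite /h !ge_min lexx.
  have h3 : h <= e by rewrite /h ge_min lexx orbT.
  have := H (w + h).
  have -> : w + h - w = h by ring.
  rewrite gtr0_norm //.
  move=> /(_ ltac:(lra) ltac:(lra)).
  have hb : B * h <= c / 2 by nra.
  have := key h. nra.
Qed.


Lemma near_aff (c k w : R) : 0 < c ->
  exists2 d, 0 < d & forall p, `|p - w| < d -> 0 < c + k * (p - w).
Proof.
move=> c0; exists (c / (`|k| + 1)).
  by apply: divr_gt0 => //; have := normr_ge0 k; lra.
move=> p hp.
have hk : 0 < `|k| + 1 by have := normr_ge0 k; lra.
have h1 : `|p - w| * (`|k| + 1) < c by rewrite -ltr_pdivlMr.
have h2 : `|k * (p - w)| <= `|p - w| * (`|k| + 1).
  rewrite normrM mulrC ler_wpM2l //; lra.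
have := ler_norm (- (k * (p - w))); rewrite normrN. lra.
Qed.

Lemma meas_itv (b0 b1 : bool) (x y : R) : x < y ->
  fine (lebesgue_measure [set` Interval (BSide b0 x) (BSide b1 y)]) = y - x.
Proof.
move=> xy; rewrite lebesgue_measure_itv /= lte_fin.
case: b0 b1 => [] [] /=; rewrite ?xy //=.
Qed.



Lemma I3_cases (j : 'I_3) : j = cdn1 \/ j = cdn2 \/ j = cdn3.
Proof.
case: j => [[|[|[|n]]] Hn].
- by left; apply/val_inj.
- by right; left; apply/val_inj.
- by right; right; apply/val_inj.
- by [].
Qed.

Lemma all_others (k : 'I_3) (P : 'I_3 -> Prop) :
  (forall j, j != k -> P j) <-> 
  ((cdn1 != k -> P cdn1) /\ (cdn2 != k -> P cdn2) /\ (cdn3 != k -> P cdn3)).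
Proof.
split; first by move=> H; split; [|split]; apply: H.
move=> [H1 [H2 H3]] j; case: (I3_cases j) => [->|[->|->]] //.
Qed.

Lemma choosers_eq (beta v : 'I_3 -> R) (x y z : R) :
  beta cdn3 < 1 -> beta cdn2 < beta cdn3 -> beta cdn1 < beta cdn2 ->
  v cdn3 = x * (1 - beta cdn3) ->
  v cdn2 = v cdn3 + y * (beta cdn3 - beta cdn2) ->
  v cdn1 = v cdn2 + z * (beta cdn2 - beta cdn1) ->
  0 <= x -> x < y -> y < z -> z < 1 ->
  choosers beta v cdn3 = [set` `]x, y[] /\
  choosers beta v cdn2 = [set` `]y, z[] /\
  choosers beta v cdn1 = [set` `]z, 1]].
Proof.
move=> b3 b23 b12 e3 e2 e1 x0 xy yz z1.
have P3 : forall t, payoff beta v t cdn3 = (t - x) * (1 - beta cdn3).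
  by move=> t; rewrite /payoff e3; ring.
have P2 : forall t, payoff beta v t cdn2 = payoff beta v t cdn3 + (t - y) * (beta cdn3 - beta cdn2).
  by move=> t; rewrite /payoff e2 e3; ring.
have P1 : forall t, payoff beta v t cdn1 = payoff beta v t cdn2 + (t - z) * (beta cdn2 - beta cdn1).
  by move=> t; rewrite /payoff e1 e2 e3; ring.
rewrite /choosers.
split; [|split]; apply/seteqP; split => t /=; rewrite in_itv /=;
  rewrite ?all_others /= ?P1 ?P2 ?P3.
- move=> [/andP[t0 t1] [h3 [h1 [h2 _]]]].
  apply/andP; split; [nra | nra].
- move=> /andP[xt ty]; split; first (apply/andP; split; lra).
  split; first nra. split; [nra|split; [nra|done]].
- move=> [/andP[t0 t1] [h3 [h1 [_ h2]]]].
  apply/andP; split; [nra | nra].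
- move=> /andP[xt ty]; split; first (apply/andP; split; lra).
  split; first nra. split; [nra|split; [done|nra]].
- move=> [/andP[t0 t1] [h3 [_ [h1 h2]]]].
  apply/andP; split; [nra | lra].
- move=> /andP[xt ty]; split; first (apply/andP; split; lra).
  split; first nra. split; [done|split; nra].
Qed.



Lemma final_alg (L a d1 d2 w1 w2 w3 x y z : R) :
  0 < L -> 0 < a -> 0 < d1 -> 0 < d2 ->
  w3 = x * a -> w2 = w3 + y * d2 -> w1 = w2 + z * d1 ->
  (y - x) * d2 * a = w3 * (a + d2) ->
  (z - y) * d1 * d2 = w2 * (d1 + d2) ->
  (1 - z) * d1 = w1 ->
  0 <= x -> x < y -> y < z -> z < 1 ->
  let D1 := L * (1 - z) in let D2 := L * (z - y) in let D3 := L * (y - x) in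
  D1 > D2 /\ D2 > 2 * D3 /\ w1 > 3 / 2 * w2 /\ 3 / 2 * w2 > 3 * w3 /\
  D2 * w2 >= 4 * (D3 * w3) /\ D1 * w1 >= 6 * (D3 * w3) /\
  D1 * w1 > 3 / 2 * (D2 * w2) /\ 3 / 2 * (D2 * w2) > 6 * (D3 * w3).
Proof.
move=> L0 a0 d10 d20 E3 E2 E1 I II III x0 xy yz z1 D1 D2 D3.
have ad : 0 < a + d2 by lra.
have w3p : 0 < w3.
  have : 0 < (y - x) * d2 * a by apply: mulr_gt0 => //; apply: mulr_gt0 => //; lra.
  rewrite I. nra.
have w2p : 0 < w2 by nra.
have F3 : w2 * a = 2 * w3 * a + 2 * w3 * d2.
  have : (y - x) * d2 * a = (w2 - w3) * a - w3 * d2 by rewrite E2 E3; ring.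
  lra.
have c_d : w2 > 2 * w3.
  have h : 0 < 2 * w3 * d2 by nra.
  have : (w2 - 2 * w3) * a > 0 by nra.
  nra.
have c_b : z - y > 2 * (y - x).
  have h1 : (z - y) * (d1 * d2 * a) = w2 * (d1 + d2) * a by rewrite -II; ring.
  have h2 : 2 * (y - x) * (d1 * d2 * a) = d1 * (w2 * a).
    have -> : 2 * (y - x) * (d1 * d2 * a) = 2 * d1 * ((y - x) * d2 * a) by ring.
    by rewrite I F3; ring.
  have h3 : 0 < d1 * d2 * a by apply: mulr_gt0 => //; apply: mulr_gt0.
  have : (z - y) * (d1 * d2 * a) > 2 * (y - x) * (d1 * d2 * a).
    rewrite h1 h2. have : 0 < w2 * d2 * a by apply: mulr_gt0 => //; apply: mulr_gt0.
    nra.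
  nra.
have c_a : 1 - z > z - y.
  have h0 : (z - y) * d2 > w2.
    have : (z - y) * d2 * d1 = w2 * d1 + w2 * d2 by rewrite mulrAC II; ring.
    nra.
  have : (1 - z) * (d1 * d2) > (z - y) * (d1 * d2).
    have -> : (1 - z) * (d1 * d2) = w1 * d2 by rewrite -III; ring.
    rewrite mulrA II E1.
    have : 0 < d1 * ((z - y) * d2 - w2) by apply: mulr_gt0 => //; lra.
    have : 0 <= d1 * (y * d2) by apply: mulr_ge0; [lra| apply: mulr_ge0; lra].
    nra.
  have : 0 < d1 * d2 by apply: mulr_gt0.
  nra.
have c_c : w1 > 3 / 2 * w2.
  have W2 : w2 = (1 - 2 * z) * d1 by lra.
  have h : (z - y) * d2 = (1 - 2 * z) * (d1 + d2).
    have : (z - y) * d1 * d2 = (1 - 2 * z) * (d1 + d2) * d1 by rewrite II W2; ring.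
    move=> h. apply: (mulIf (x := d1)); first by rewrite gt_eqF.
    rewrite -h. ring.
  have z4 : z > 1 / 4 by nra.
  nra.
rewrite /D1 /D2 /D3.
have p3 : 0 < L * (y - x) by apply: mulr_gt0 => //; lra.
have p2 : 0 < L * (z - y) by apply: mulr_gt0 => //; lra.
have q2 : L * (z - y) > 2 * (L * (y - x)) by nra.
have q1 : L * (1 - z) > L * (z - y) by nra.
have J24 : L * (z - y) * w2 > 4 * (L * (y - x) * w3) by nra.
have J12 : L * (1 - z) * w1 > 3 / 2 * (L * (z - y) * w2) by nra.
split; first lra. split; first lra. split; first lra. split; first lra.
split; first lra. split; first lra. split; lra.
Qed.

End Helpers.

Section More.
Variable R : realType.
Local Open Scope classical_set_scope.
Local Open Scope ring_scope.

Lemma sp_same (w : 'I_3 -> R) k p : set_price w k p k = p.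
Proof. by rewrite /set_price eqxx. Qed.

Lemma sp_other (w : 'I_3 -> R) k j p : j != k -> set_price w k p j = w j.
Proof. by rewrite /set_price => /negbTE ->. Qed.

Lemma sp_id (w : 'I_3 -> R) k : set_price w k (w k) = w.
Proof. by apply: funext => j; rewrite /set_price; case: eqP => // ->. Qed.

Lemma choosers_ne (Lam : R) beta w k :
  0 < demand Lam beta w k -> exists t, choosers beta w k t.
Proof.
move=> H; apply: contrapT => Hn.
have E : choosers beta w k = set0.
  by apply/seteqP; split => t // Ht; apply: Hn; exists t.
by move: H; rewrite /demand E measure0 /= mulr0 ltxx.
Qed.
Arguments choosers_ne {Lam beta w k}.

Lemma firm_foc (Lam : R) beta w k A B d : 0 < B -> 0 < d -> 0 <= w k ->
  0 < A - B * w k -> nash_eq Lam beta w ->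
  (forall p, 0 <= p -> `|p - w k| < d ->
     revenue Lam beta (set_price w k p) k = p * (A - B * p)) ->
  A = 2 * B * w k.
Proof.
move=> B0 d0 wk Aw [_ N] H.
apply: (@foc R A B (w k) d B0 d0 wk Aw) => p p0 hp.
have Hw := H (w k) wk ltac:(by rewrite subrr normr0).
rewrite sp_id in Hw.
rewrite -Hw -H //.
exact: N.
Qed.

Lemma choosers_eq2 (beta v : 'I_3 -> R) (b1 b2 b3 x y z : R) :
  beta cdn1 = b1 -> beta cdn2 = b2 -> beta cdn3 = b3 ->
  b3 < 1 -> b2 < b3 -> b1 < b2 ->
  v cdn3 = x * (1 - b3) ->
  v cdn2 = v cdn3 + y * (b3 - b2) ->
  v cdn1 = v cdn2 + z * (b2 - b1) ->
  0 <= x -> x < y -> y < z -> z < 1 ->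
  choosers beta v cdn3 = [set` `]x, y[] /\
  choosers beta v cdn2 = [set` `]y, z[] /\
  choosers beta v cdn1 = [set` `]z, 1]].
Proof. move=> <- <- <-; exact: choosers_eq. Qed.

Lemma order_of (Lam : R) (beta v : 'I_3 -> R) (b1 b2 b3 x y z : R) :
  beta cdn1 = b1 -> beta cdn2 = b2 -> beta cdn3 = b3 ->
  b3 < 1 -> b2 < b3 -> b1 < b2 ->
  v cdn3 = x * (1 - b3) ->
  v cdn2 = v cdn3 + y * (b3 - b2) ->
  v cdn1 = v cdn2 + z * (b2 - b1) ->
  (forall k, 0 < demand Lam beta v k) ->
  x < y /\ y < z /\ z < 1.
Proof.
move=> eb1 eb2 eb3 hb3 b23 b12 e3 e2 e1 D.
have P3 : forall t, payoff beta v t cdn3 = (t - x) * (1 - b3).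
  by move=> t; rewrite /payoff e3 eb3; ring.
have P2 : forall t, payoff beta v t cdn2 = payoff beta v t cdn3 + (t - y) * (b3 - b2).
  by move=> t; rewrite /payoff e2 e3 ?eb3 ?eb2; ring.
have P1 : forall t, payoff beta v t cdn1 = payoff beta v t cdn2 + (t - z) * (b2 - b1).
  by move=> t; rewrite /payoff e1 e2 e3 ?eb1 ?eb2 ?eb3; ring.
have [t3 [_ [q3 H3]]] := choosers_ne (D cdn3).
have [t2 [_ [q2 H2]]] := choosers_ne (D cdn2).
have [t1 [/andP[_ t11] [q1 H1]]] := choosers_ne (D cdn1).
have q32 := H3 cdn2 isT. have q31 := H3 cdn1 isT.
have q23 := H2 cdn3 isT. have q21 := H2 cdn1 isT.
have q12 := H1 cdn2 isT.
rewrite ?P1 ?P2 ?P3 in q3 q32 q31 q2 q23 q21 q1 q12.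
have xt : x < t3 by nra.
have ty : t3 < y by nra.
have yt : y < t2 by nra.
have tz : t2 < z by nra.
have zt : z < t1 by nra.
split; [lra|split; lra].
Qed.

End More.
Arguments order_of {R Lam beta v b1 b2 b3 x y z}.
Arguments choosers_eq2 {R beta v b1 b2 b3 x y z}.

Ltac fld := field; do ?[apply/andP; split]; done.

Theorem theorem2 (R : realType) (Lam : R) (beta w : 'I_3 -> R) :
  0 < Lam ->
  0 <= beta cdn1 -> beta cdn1 < beta cdn2 -> beta cdn2 < beta cdn3 -> beta cdn3 < 1 ->
  nash_eq Lam beta w ->
  (forall k, 0 < demand Lam beta w k) ->
  demand Lam beta w cdn1 > demand Lam beta w cdn2  /\
  demand Lam beta w cdn2 > 2 * demand Lam beta w cdn3  /\
  w cdn1 > 3 / 2 * w cdn2  /\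
  3 / 2 * w cdn2 > 3 * w cdn3  /\
  revenue Lam beta w cdn2 >= 4 * revenue Lam beta w cdn3  /\
  revenue Lam beta w cdn1 >= 6 * revenue Lam beta w cdn3  /\
  revenue Lam beta w cdn1 > 3 / 2 * revenue Lam beta w cdn2 /\
  3 / 2 * revenue Lam beta w cdn2 > 6 * revenue Lam beta w cdn3.
Proof.
move=> L0 hb1 h12 h23 h3 NE Dpos.
have wnn : forall k, 0 <= w k by case: NE.
have [b1 eb1] : exists b, beta cdn1 = b by exists (beta cdn1).
have [b2 eb2] : exists b, beta cdn2 = b by exists (beta cdn2).
have [b3 eb3] : exists b, beta cdn3 = b by exists (beta cdn3).
rewrite eb1 eb2 eb3 in hb1 h12 h23 h3.
have nL : Lam != 0 by rewrite gt_eqF.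
have na : 1 - b3 != 0 by rewrite gt_eqF // subr_gt0.
have nd2 : b3 - b2 != 0 by rewrite gt_eqF // subr_gt0.
have nd1 : b2 - b1 != 0 by rewrite gt_eqF // subr_gt0.
have [x ex] : exists x, w cdn3 = x * (1 - b3).
  by exists (w cdn3 / (1 - b3)); fld.
have [y ey] : exists y, w cdn2 = w cdn3 + y * (b3 - b2).
  by exists ((w cdn2 - w cdn3) / (b3 - b2)); fld.
have [z ez] : exists z, w cdn1 = w cdn2 + z * (b2 - b1).
  by exists ((w cdn1 - w cdn2) / (b2 - b1)); fld.
have [xy [yz z1]] := order_of eb1 eb2 eb3 h3 h23 h12 ex ey ez Dpos.
have x0 : 0 <= x.
  have := wnn cdn3; rewrite ex => h.
  nra.
have [C3 [C2 C1]] := choosers_eq2 eb1 eb2 eb3 h3 h23 h12 ex ey ez x0 xy yz z1.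
have D3e : demand Lam beta w cdn3 = Lam * (y - x) by rewrite /demand C3 meas_itv.
have D2e : demand Lam beta w cdn2 = Lam * (z - y) by rewrite /demand C2 meas_itv.
have D1e : demand Lam beta w cdn1 = Lam * (1 - z) by rewrite /demand C1 meas_itv.
have I3 : (y - x) * (b3 - b2) * (1 - b3) = w cdn3 * ((1 - b3) + (b3 - b2)).
  have [e1 e1p He1] := @near_aff R (y - x) (- (1/(b3-b2) + 1/(1-b3))) (w cdn3) ltac:(lra).
  have [e2 e2p He2] := @near_aff R (z - y) (1/(b3-b2)) (w cdn3) ltac:(lra).
  have E := @firm_foc R Lam beta w cdn3 (Lam * (w cdn2 / (b3-b2)))
     (Lam * (1/(b3-b2) + 1/(1-b3))) (Num.min e1 e2).
  have AB : Lam * (w cdn2 / (b3-b2)) - Lam * (1/(b3-b2) + 1/(1-b3)) * w cdn3 = Lam * (y - x).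
    by rewrite ey ex; fld.
  have B0 : 0 < Lam * (1/(b3-b2) + 1/(1-b3)).
    apply: mulr_gt0 => //; apply: addr_gt0; apply: divr_gt0; lra.
  have := E B0 ltac:(rewrite lt_min; apply/andP; split => //) (wnn cdn3)
     ltac:(rewrite AB; apply: mulr_gt0 => //; lra) NE.
  have Hrev : forall p, 0 <= p -> `|p - w cdn3| < Num.min e1 e2 ->
     revenue Lam beta (set_price w cdn3 p) cdn3 =
     p * (Lam * (w cdn2 / (b3-b2)) - Lam * (1/(b3-b2) + 1/(1-b3)) * p).
    move=> p p0; rewrite lt_min => /andP[hp1 hp2].
    have c1 := He1 p hp1; have c2 := He2 p hp2.
    have i1 : (w cdn2 - p) / (b3 - b2) - p / (1 - b3) =
       y - x + - (1 / (b3 - b2) + 1 / (1 - b3)) * (p - w cdn3).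
      by rewrite ey ex; fld.
    have i2 : z - (w cdn2 - p) / (b3 - b2) = z - y + 1 / (b3 - b2) * (p - w cdn3).
      by rewrite ey ex; fld.
    have v3 : set_price w cdn3 p cdn3 = p / (1 - b3) * (1 - b3) by rewrite sp_same; fld.
    have v2 : set_price w cdn3 p cdn2 = set_price w cdn3 p cdn3 + (w cdn2 - p) / (b3 - b2) * (b3 - b2).
      by rewrite sp_same sp_other //; fld.
    have v1 : set_price w cdn3 p cdn1 = set_price w cdn3 p cdn2 + z * (b2 - b1).
      by rewrite !sp_other //.
    have o0 : 0 <= p / (1 - b3) by apply: divr_ge0 => //; lra.
    have [C _] := choosers_eq2 eb1 eb2 eb3 h3 h23 h12 v3 v2 v1 o0 ltac:(lra) ltac:(lra) z1.
    rewrite /revenue /demand C meas_itv ?sp_same; last lra.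
    fld.
  move=> /(_ Hrev) F.
  apply/eqP; rewrite -subr_eq0.
  rewrite (_ : _ - _ = (b3 - b2) * (1 - b3) / Lam *
    (Lam * (w cdn2 / (b3 - b2)) - 2 * (Lam * (1 / (b3 - b2) + 1 / (1 - b3))) * w cdn3)).
    by rewrite -F subrr mulr0.
  rewrite ey ex; fld.
have I2 : (z - y) * (b2 - b1) * (b3 - b2) = w cdn2 * ((b2 - b1) + (b3 - b2)).
  have [e1 e1p He1] := @near_aff R (y - x) (1/(b3-b2)) (w cdn2) ltac:(lra).
  have [e2 e2p He2] := @near_aff R (z - y) (- (1/(b2-b1) + 1/(b3-b2))) (w cdn2) ltac:(lra).
  have [e3 e3p He3] := @near_aff R (1 - z) (1/(b2-b1)) (w cdn2) ltac:(lra).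
  have E := @firm_foc R Lam beta w cdn2 (Lam * (w cdn1 / (b2-b1) + w cdn3 / (b3-b2)))
     (Lam * (1/(b2-b1) + 1/(b3-b2))) (Num.min e1 (Num.min e2 e3)).
  have AB : Lam * (w cdn1 / (b2-b1) + w cdn3 / (b3-b2)) - Lam * (1/(b2-b1) + 1/(b3-b2)) * w cdn2 = Lam * (z - y).
    by rewrite ez ey ex; fld.
  have B0 : 0 < Lam * (1/(b2-b1) + 1/(b3-b2)).
    apply: mulr_gt0 => //; apply: addr_gt0; apply: divr_gt0; lra.
  have := E B0 ltac:(rewrite !lt_min; apply/andP; split => //; apply/andP; split => //) (wnn cdn2)
     ltac:(rewrite AB; apply: mulr_gt0 => //; lra) NE.
  have Hrev : forall p, 0 <= p -> `|p - w cdn2| < Num.min e1 (Num.min e2 e3) ->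
     revenue Lam beta (set_price w cdn2 p) cdn2 =
     p * (Lam * (w cdn1 / (b2-b1) + w cdn3 / (b3-b2)) - Lam * (1/(b2-b1) + 1/(b3-b2)) * p).
    move=> p p0; rewrite !lt_min => /andP[hp1 /andP[hp2 hp3]].
    have c1 := He1 p hp1; have c2 := He2 p hp2; have c3 := He3 p hp3.
    have i1 : (p - w cdn3) / (b3 - b2) - x = y - x + 1 / (b3 - b2) * (p - w cdn2).
      by rewrite ey ex; fld.
    have i2 : (w cdn1 - p) / (b2 - b1) - (p - w cdn3) / (b3 - b2) =
       z - y + - (1 / (b2 - b1) + 1 / (b3 - b2)) * (p - w cdn2).
      by rewrite ez ey ex; fld.
    have i3 : 1 - (w cdn1 - p) / (b2 - b1) = 1 - z + 1 / (b2 - b1) * (p - w cdn2).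
      by rewrite ez ey ex; fld.
    have v3 : set_price w cdn2 p cdn3 = x * (1 - b3) by rewrite sp_other.
    have v2 : set_price w cdn2 p cdn2 = set_price w cdn2 p cdn3 + (p - w cdn3) / (b3 - b2) * (b3 - b2).
      by rewrite sp_same sp_other //; fld.
    have v1 : set_price w cdn2 p cdn1 = set_price w cdn2 p cdn2 + (w cdn1 - p) / (b2 - b1) * (b2 - b1).
      by rewrite sp_same sp_other //; fld.
    have [_ [C _]] := choosers_eq2 eb1 eb2 eb3 h3 h23 h12 v3 v2 v1 x0 ltac:(lra) ltac:(lra) ltac:(lra).
    rewrite /revenue /demand C meas_itv ?sp_same; last lra.
    fld.
  move=> /(_ Hrev) F.
  apply/eqP; rewrite -subr_eq0.
  rewrite (_ : _ - _ = (b2 - b1) * (b3 - b2) / Lam *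
    (Lam * (w cdn1 / (b2-b1) + w cdn3 / (b3-b2)) - 2 * (Lam * (1/(b2-b1) + 1/(b3-b2))) * w cdn2)).
    by rewrite -F subrr mulr0.
  rewrite ez ey ex; fld.
have I1 : (1 - z) * (b2 - b1) = w cdn1.
  have [e1 e1p He1] := @near_aff R (z - y) (1/(b2-b1)) (w cdn1) ltac:(lra).
  have [e2 e2p He2] := @near_aff R (1 - z) (- (1/(b2-b1))) (w cdn1) ltac:(lra).
  have E := @firm_foc R Lam beta w cdn1 (Lam * (1 + w cdn2 / (b2-b1)))
     (Lam * (1/(b2-b1))) (Num.min e1 e2).
  have AB : Lam * (1 + w cdn2 / (b2-b1)) - Lam * (1/(b2-b1)) * w cdn1 = Lam * (1 - z).
    by rewrite ez; fld.
  have B0 : 0 < Lam * (1/(b2-b1)).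
    apply: mulr_gt0 => //; apply: divr_gt0; lra.
  have := E B0 ltac:(rewrite lt_min; apply/andP; split => //) (wnn cdn1)
     ltac:(rewrite AB; apply: mulr_gt0 => //; lra) NE.
  have Hrev : forall p, 0 <= p -> `|p - w cdn1| < Num.min e1 e2 ->
     revenue Lam beta (set_price w cdn1 p) cdn1 =
     p * (Lam * (1 + w cdn2 / (b2-b1)) - Lam * (1/(b2-b1)) * p).
    move=> p p0; rewrite lt_min => /andP[hp1 hp2].
    have c1 := He1 p hp1; have c2 := He2 p hp2.
    have i1 : (p - w cdn2) / (b2 - b1) - y = z - y + 1 / (b2 - b1) * (p - w cdn1).
      by rewrite ez; fld.
    have i2 : 1 - (p - w cdn2) / (b2 - b1) = 1 - z + - (1 / (b2 - b1)) * (p - w cdn1).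
      by rewrite ez; fld.
    have v3 : set_price w cdn1 p cdn3 = x * (1 - b3) by rewrite sp_other.
    have v2 : set_price w cdn1 p cdn2 = set_price w cdn1 p cdn3 + y * (b3 - b2).
      by rewrite !sp_other.
    have v1 : set_price w cdn1 p cdn1 = set_price w cdn1 p cdn2 + (p - w cdn2) / (b2 - b1) * (b2 - b1).
      by rewrite sp_same sp_other //; fld.
    have [_ [_ C]] := choosers_eq2 eb1 eb2 eb3 h3 h23 h12 v3 v2 v1 x0 xy ltac:(lra) ltac:(lra).
    rewrite /revenue /demand C meas_itv ?sp_same; last lra.
    fld.
  move=> /(_ Hrev) F.
  apply/eqP; rewrite -subr_eq0.
  rewrite (_ : _ - _ = (b2 - b1) / Lam *
    (Lam * (1 + w cdn2 / (b2-b1)) - 2 * (Lam * (1/(b2-b1))) * w cdn1)).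
    by rewrite -F subrr mulr0.
  rewrite ez; fld.
have := @final_alg R Lam (1 - b3) (b2 - b1) (b3 - b2) (w cdn1) (w cdn2) (w cdn3) x y z
  L0 ltac:(lra) ltac:(lra) ltac:(lra) ex ey ez I3 I2 I1 x0 xy yz z1.
move=> /= H.
by rewrite /revenue D1e D2e D3e.
Qed.
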